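(* Let $V$ be a valuation domain with quotient field $K$, and let $W_1,W_2$ be torsion extensions of $V$ to $K(X)$, with valuations $w_1,w_2$ and maximal ideals $M_1,M_2$. Then: (1) The following are equivalent: (a) $w_1\le w_2$; (b) $W_1\cap K[X]\subseteq W_2\cap K[X]$; (c) $M_1\cap K[X]\subseteq M_2\cap K[X]$. (2) $W_1=W_2$ if and only if $W_1\cap K[X]=W_2\cap K[X]$, if and only if $M_1\cap K[X]=M_2\cap K[X]$. (3) The set $\mathcal{W}_{\mathrm t}$ of torsion extensions of $V$ to $K(X)$ is partially ordered by $\le$.
   Context: Let $v$ be the valuation of $V$, $\Gamma_v$ its value group, $\Gamma_{\overline{v}}=\Gamma_v\otimes_{\mathbb{Z}}\mathbb{Q}$. An extension of $V$ to $K(X)$ is a valuation domain $W$ of $K(X)$ with $W\cap K=V$; it is a torsion extension if its value group $\Gamma_w$ is contained in $\Gamma_{\overline{v}}$ (i.e. $\Gamma_w/\Gamma_v$ is torsion). For torsion extensions, $w_1\le w_2$ means $w_1(f)\le w_2(f)$ in $\Gamma_{\overline{v}}$ for all $f\in K[X]$. *)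

(* Defs.v *)
From HB Require Import structures.
From mathcomp Require Import all_boot all_order all_algebra fraction.
Set Implicit Arguments. Unset Strict Implicit. Unset Printing Implicit Defensive.
Import Order.TTheory GRing.Theory Num.Theory.
Local Open Scope ring_scope.

Definition ratfun (K : fieldType) := {fraction {poly K}}.

Definition polyF (K : fieldType) (p : {poly K}) : ratfun K := @FracField.tofrac _ p.
Definition constF (K : fieldType) (c : K) : ratfun K := @FracField.tofrac _ c%:P.

Definition valuation_ring (F : fieldType) (W : F -> Prop) : Prop :=
  [/\ W 1,
      (forall x y, W x -> W y -> W (x - y)),
      (forall x y, W x -> W y -> W (x * y)) &
      (forall x, x != 0 -> W x \/ W x^-1)].

Definition vunit (F : fieldType) (W : F -> Prop) (x : F) : Prop :=
  [/\ x != 0, W x & W x^-1].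

Definition vmax (F : fieldType) (W : F -> Prop) (x : F) : Prop :=
  W x /\ ~ vunit W x.

Definition extension (K : fieldType) (V : K -> Prop) (W : ratfun K -> Prop) :=
  valuation_ring W /\ (forall c : K, W (constF c) <-> V c).

(* torsion extension: Gamma_w / Gamma_v is torsion, i.e. for every nonzero f,
   some n > 0 and a \in K^* with w(f^n) = v(a), i.e. f^n / a a unit of W. *)
Definition torsion_extension (K : fieldType) (V : K -> Prop)
    (W : ratfun K -> Prop) :=
  extension V W /\
  (forall f : ratfun K, f != 0 ->
     exists n : nat, (0 < n)%N /\
       exists a : K, a != 0 /\ vunit W (f ^+ n / constF a)).

(* w1 <= w2 : w1(f) <= w2(f) in Gamma_v (x) Q for all f in K[X].
   For f = 0 both sides are infinite.  For f <> 0, w1(f) = v(a1)/n and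
   w2(f) = v(a2)/n where w1(f^n) = v(a1), w2(f^n) = v(a2); and
   v(a1) <= v(a2) iff a2/a1 \in V. *)
Definition val_le (K : fieldType) (V : K -> Prop) (W1 W2 : ratfun K -> Prop) :=
  forall p : {poly K}, p != 0 ->
    exists n : nat, (0 < n)%N /\
      exists a1 a2 : K, [/\ a1 != 0, a2 != 0,
        vunit W1 (polyF p ^+ n / constF a1),
        vunit W2 (polyF p ^+ n / constF a2) &
        V (a2 / a1)].

(* Main.v *)
Require Import Defs.
From HB Require Import structures.
From mathcomp Require Import all_boot all_order all_algebra fraction.
From mathcomp Require Import ring.
From Stdlib Require Import Classical.
Set Implicit Arguments. Unset Strict Implicit.
Import Order.TTheory GRing.Theory Num.Theory.
Local Open Scope ring_scope.

Section FR.
Local Open Scope quotient_scope.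
Lemma frac_repr (R: idomainType) (x : {fraction R}) :
  exists a b : R, b != 0 /\ x * FracField.tofrac b = FracField.tofrac a.
Proof.
elim/quotW: x => r. exists \n_r, \d_r; split; first exact: denom_ratioP.
change (FracField.mul (\pi r) (FracField.tofrac \d_r) = FracField.tofrac \n_r).
rewrite /FracField.tofrac; unlock; rewrite -FracField.pi_mul.
apply/eqP; rewrite FracField.equivf_def /FracField.mulf !numden_Ratio ?mulf_neq0 ?oner_eq0 //.
all: try exact: denom_ratioP.
by rewrite !mulr1 mulrC.
Qed.
End FR.

Section VR.
Variable F : fieldType.
Variable W : F -> Prop.
Hypothesis hW : valuation_ring W.

Lemma vr1 : W 1. Proof. by case: hW. Qed.
Lemma vrB x y : W x -> W y -> W (x - y). Proof. by case: hW => _ h *; apply: h. Qed.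
Lemma vrM x y : W x -> W y -> W (x * y). Proof. by case: hW => _ _ h *; apply: h. Qed.
Lemma vr0 : W 0. Proof. by have := @vrB 1 1 vr1 vr1; rewrite subrr. Qed.
Lemma vrX x n : W x -> W (x ^+ n).
Proof. move=> Wx; elim: n => [|n IH]; first by rewrite expr0; apply: vr1. by rewrite exprS; apply: vrM. Qed.
Lemma vr_inv x : x != 0 -> W x \/ W x^-1. Proof. by case: hW => _ _ _ h; apply: h. Qed.

Lemma vr_root x n : (0 < n)%N -> W (x ^+ n) -> W x.
Proof.
case: n => // m _ Wx.
have [->|x0] := eqVneq x 0; first exact: vr0.
case: (vr_inv x0) => // Wi.
have -> : x = x ^+ m.+1 * (x^-1) ^+ m.
  by rewrite exprVn exprS mulfK // expf_neq0.
by apply: vrM => //; apply: vrX.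
Qed.

Lemma vunitM x y : vunit W x -> vunit W y -> vunit W (x * y).
Proof.
case=> x0 Wx Wxi [y0 Wy Wyi]; split; first by rewrite mulf_neq0.
  exact: vrM.
by rewrite invfM; apply: vrM.
Qed.

Lemma vunitV x : vunit W x -> vunit W x^-1.
Proof. by case=> x0 Wx Wxi; split; rewrite ?invr_eq0 ?invrK. Qed.

Lemma vunitX x n : vunit W x -> vunit W (x ^+ n).
Proof.
case=> x0 Wx Wxi; split; first by rewrite expf_neq0.
  exact: vrX.
by rewrite -exprVn; apply: vrX.
Qed.

Lemma vunit_root x n : (0 < n)%N -> W x -> vunit W (x ^+ n) -> vunit W x.
Proof.
case: n => // m _ Wx [xn0 _ Wxn].
have x0 : x != 0 by apply: contraNneq xn0 => ->; rewrite expr0n.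
split => //.
have -> : x^-1 = x ^+ m * (x ^+ m.+1)^-1.
  by rewrite exprS invfM mulrCA divff ?mulr1 // expf_neq0.
by apply: vrM => //; apply: vrX.
Qed.

End VR.

Lemma vunit_ext (F : fieldType) (W W' : F -> Prop) :
  (forall f, W f <-> W' f) -> forall x, vunit W x <-> vunit W' x.
Proof. by move=> h x; split; case=> a b c; split => //; apply/h. Qed.

Lemma vmax_ext (F : fieldType) (W W' : F -> Prop) :
  (forall f, W f <-> W' f) -> forall x, vmax W x <-> vmax W' x.
Proof.
move=> h x; split; case=> a b; split; try by apply/h.
  by move=> /(vunit_ext h).
by move=> /(vunit_ext h).
Qed.

Section Frac.
Variable K : fieldType.
Local Notation F := (ratfun K).

Lemma polyF_eq0 (p : {poly K}) : (polyF p == 0) = (p == 0).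
Proof. exact: tofrac_eq0. Qed.
Lemma constF_eq0 (c : K) : (constF c == 0) = (c == 0).
Proof. by rewrite /constF tofrac_eq0 polyC_eq0. Qed.
Lemma polyFM (p q : {poly K}) : polyF (p * q) = polyF p * polyF q.
Proof. exact: tofracM. Qed.
Lemma polyFX (p : {poly K}) n : polyF (p ^+ n) = polyF p ^+ n.
Proof. exact: tofracXn. Qed.
Lemma constFM (a b : K) : constF (a * b) = constF a * constF b.
Proof. by rewrite /constF polyCM tofracM. Qed.
Lemma constFX (a : K) n : constF (a ^+ n) = constF a ^+ n.
Proof. by rewrite /constF rmorphXn tofracXn. Qed.
Lemma constF1 : constF (1 : K) = 1.
Proof. by rewrite /constF tofrac1. Qed.
Lemma constFV (c : K) : c != 0 -> constF c^-1 = (constF c)^-1.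
Proof.
move=> c0; have cF0 : constF c != 0 by rewrite constF_eq0.
have h : constF c^-1 * constF c = 1 by rewrite -constFM mulVf // constF1.
by rewrite -[LHS]mulr1 -(divff cF0) mulrA h mul1r.
Qed.
Lemma polyF_div (p : {poly K}) (a : K) : a != 0 ->
  polyF (p * (a^-1)%:P) = polyF p / constF a.
Proof. by move=> a0; rewrite polyFM -constFV. Qed.

Lemma ext_const (V : K -> Prop) (W : F -> Prop) c :
  extension V W -> W (constF c) <-> V c.
Proof. by case=> _ h; apply: h. Qed.

Lemma tor_pow (W : F -> Prop) f n a k : valuation_ring W ->
  vunit W (f ^+ n / constF a) -> vunit W (f ^+ (n * k) / constF (a ^+ k)).
Proof. by move=> hW u; rewrite exprM constFX -expr_div_n; apply: vunitX. Qed.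

Lemma common (V : K -> Prop) (W1 W2 : F -> Prop) f :
  torsion_extension V W1 -> torsion_extension V W2 -> f != 0 ->
  exists n, (0 < n)%N /\ exists a1 a2 : K, [/\ a1 != 0, a2 != 0,
    vunit W1 (f ^+ n / constF a1) & vunit W2 (f ^+ n / constF a2)].
Proof.
move=> [[hW1 _] t1] [[hW2 _] t2] f0.
have [n1 [n10 [b1 [b10 u1]]]] := t1 f f0.
have [n2 [n20 [b2 [b20 u2]]]] := t2 f f0.
exists (n1 * n2)%N; split; first by rewrite muln_gt0 n10 n20.
exists (b1 ^+ n2), (b2 ^+ n1); split; try by rewrite expf_neq0.
  exact: tor_pow.
by rewrite mulnC; apply: tor_pow.
Qed.

End Frac.

Section Ids.
Variable F : fieldType.
Implicit Types x y z u v c : F.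
Lemma I1 x y : x != 0 -> y = x * (x / y)^-1.
Proof. move=> hx; rewrite invf_div; field; by rewrite hx. Qed.
Lemma I3 x y z : x != 0 -> z / y = x / y * (x / z)^-1.
Proof. move=> hx; rewrite invf_div. have [->|hy] := eqVneq y 0; first by rewrite !(mulr0,mul0r,invr0). field; by rewrite hx hy. Qed.
Lemma I4 x y : y != 0 -> x^-1 = y / x * y^-1.
Proof. move=> hy. have [->|hx] := eqVneq x 0; first by rewrite !(mulr0,mul0r,invr0). field. by rewrite hx hy. Qed.
Lemma I5 x y z : y != 0 -> x / z = x / y * (z / y)^-1.
Proof. move=> hy; rewrite invf_div. have [->|hz] := eqVneq z 0; first by rewrite !(mulr0,mul0r,invr0). field. by rewrite hz hy. Qed.
Lemma I7 x y a b : a != 0 -> b != 0 -> x / y = x / a / (y / b) * (a / b).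
Proof. move=> ha hb. have [->|hy] := eqVneq y 0; first by rewrite !(mulr0,mul0r,invr0). rewrite invf_div. field. by rewrite ha hb hy. Qed.
Lemma I8 u v c : u != 0 -> v != 0 -> c = u / v * c * v / u.
Proof. move=> hu hv. field. by rewrite hu hv. Qed.
End Ids.

Lemma le_mem (K : fieldType) (V : K -> Prop) (W1 W2 : ratfun K -> Prop) :
  valuation_ring V -> torsion_extension V W1 -> torsion_extension V W2 ->
  val_le V W1 W2 -> forall p, W1 (polyF p) -> W2 (polyF p).
Proof.
move=> hV [[hW1 e1] _] [[hW2 e2] _] hle p Wp.
have [->|p0] := eqVneq p 0; first by rewrite /polyF tofrac0; apply: vr0.
have [n [n0 [a1 [a2 [a10 a20 u1 u2 Va]]]]] := hle p p0.
have P1 : polyF p != 0 by rewrite polyF_eq0.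
have P0 : polyF p ^+ n != 0 by rewrite (expf_neq0 _ P1).
have A2 : constF a2 != 0 by rewrite constF_eq0.
have Va1 : V a1.
  apply/(e1 _); rewrite (I1 (constF a1) P0).
  apply: (vrM hW1); first exact: vrX.
  by case: (vunitV u1).
have Va2 : V a2.
  rewrite -(divfK a10 a2); exact: (vrM hV).
apply: (vr_root hW2 n0).
rewrite -(divfK A2 (polyF p ^+ n)).
apply: (vrM hW2); first by case: u2.
exact/(e2 _).
Qed.

Lemma mem_le (K : fieldType) (V : K -> Prop) (W1 W2 : ratfun K -> Prop) :
  torsion_extension V W1 -> torsion_extension V W2 ->
  (forall p, W1 (polyF p) -> W2 (polyF p)) -> val_le V W1 W2.
Proof.
move=> t1 t2 hm p p0.
have P0 : polyF p != 0 by rewrite polyF_eq0.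
have [n [n0 [a1 [a2 [a10 a20 u1 u2]]]]] := common t1 t2 P0.
exists n; split; first exact: n0.
exists a1, a2; split; [exact: a10 | exact: a20 | exact: u1 | exact: u2 |].
case: t2 => [[hW2 e2] _].
apply/(e2 _).
have Wq : W2 (polyF (p ^+ n * (a1^-1)%:P)).
  by apply: hm; rewrite (polyF_div _ a10) polyFX; case: u1.
rewrite (polyF_div _ a10) polyFX in Wq.
have PN : polyF p ^+ n != 0 by rewrite (expf_neq0 _ P0).
rewrite constFM (constFV a10) (I3 _ _ PN).
apply: (vrM hW2 Wq); by case: (vunitV u2).
Qed.

Lemma le_max (K : fieldType) (V : K -> Prop) (W1 W2 : ratfun K -> Prop) :
  valuation_ring V -> torsion_extension V W1 -> torsion_extension V W2 ->
  val_le V W1 W2 -> forall p, vmax W1 (polyF p) -> vmax W2 (polyF p).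
Proof.
move=> hV t1 t2 hle p [Wp nu]; split; first exact: (le_mem hV t1 t2 hle).
move=> u2P; apply: nu.
have P1 : polyF p != 0 by case: u2P.
have p0 : p != 0 by rewrite -polyF_eq0.
move: t1 t2 => [[hW1 e1] _] [[hW2 e2] _].
have [n [n0 [a1 [a2 [a10 a20 u1 u2 Va]]]]] := hle p p0.
have P0 : polyF p ^+ n != 0 by rewrite (expf_neq0 _ P1).
have A1 : constF a1 != 0 by rewrite constF_eq0.
have hA2 : vunit W2 (constF a2).
  rewrite (I1 (constF a2) P0).
  apply: (vunitM hW2); [exact: vunitX | exact: vunitV].
have Va2i : V a2^-1.
  by apply/(e2 _); rewrite (constFV a20); case: (vunitV hA2).
have Va1 : V a1.
  apply/(e1 _); rewrite (I1 (constF a1) P0).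
  apply: (vrM hW1); first exact: vrX.
  by case: (vunitV u1).
have Va1i : V a1^-1 by rewrite (I4 a1 a20); exact: (vrM hV).
have hA1 : vunit W1 (constF a1).
  split; first exact: A1.
    exact/(e1 _).
  by rewrite -(constFV a10); apply/(e1 _).
apply: (vunit_root hW1 n0 Wp).
rewrite -(divfK A1 (polyF p ^+ n)).
exact: (vunitM hW1).
Qed.

Lemma max_le (K : fieldType) (V : K -> Prop) (W1 W2 : ratfun K -> Prop) :
  valuation_ring V -> torsion_extension V W1 -> torsion_extension V W2 ->
  (forall p, vmax W1 (polyF p) -> vmax W2 (polyF p)) -> val_le V W1 W2.
Proof.
move=> hV t1 t2 hm p p0.
have P0 : polyF p != 0 by rewrite polyF_eq0.
have [n [n0 [a1 [a2 [a10 a20 u1 u2]]]]] := common t1 t2 P0.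
exists n; split; first exact: n0.
exists a1, a2; split; [exact: a10 | exact: a20 | exact: u1 | exact: u2 |].
move: t1 t2 => [[hW1 e1] _] [[hW2 e2] _].
apply: NNPP => nV.
have c0 : a2 / a1 != 0 := mulf_neq0 a20 (invr_neq0 a10).
have Vci : V (a2 / a1)^-1 by case: (vr_inv hV c0) => // h; case: (nV h).
have A1 : constF a1 != 0 by rewrite constF_eq0.
have PN : polyF p ^+ n != 0 by rewrite (expf_neq0 _ P0).
have U0 : polyF p ^+ n / constF a1 != 0 := mulf_neq0 PN (invr_neq0 A1).
have eq : polyF p ^+ n / constF a2 =
    (polyF p ^+ n / constF a1) * constF (a2 / a1)^-1.
  by rewrite (constFV c0) constFM (constFV a10) (I5 _ _ A1).
have hq : vmax W1 (polyF (p ^+ n * (a2^-1)%:P)).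
  rewrite (polyF_div _ a20) polyFX eq; split.
    apply: (vrM hW1); [by case: u1 | exact/(e1 _)].
  move=> hu; apply: nV; apply/(e1 _).
  have -> : constF (a2 / a1) =
    ((polyF p ^+ n / constF a1)^-1 *
       (polyF p ^+ n / constF a1 * constF (a2 / a1)^-1))^-1.
    by rewrite (mulKf U0) (constFV c0) invrK.
  by case: (vunitV (vunitM hW1 (vunitV u1) hu)).
have [_ nu] := hm _ hq; apply: nu.
rewrite (polyF_div _ a20) polyFX; exact: u2.
Qed.

Lemma le_unit (K : fieldType) (V : K -> Prop) (W1 W2 : ratfun K -> Prop) :
  valuation_ring V -> torsion_extension V W1 -> torsion_extension V W2 ->
  val_le V W1 W2 -> val_le V W2 W1 ->
  forall p, vunit W1 (polyF p) -> vunit W2 (polyF p).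
Proof.
move=> hV t1 t2 h12 h21 p u; apply: NNPP => nu.
have W2p : W2 (polyF p) by apply: (le_mem hV t1 t2 h12); case: u.
have [_ nu1] := le_max hV t2 t1 h21 (conj W2p nu).
exact: nu1 u.
Qed.

Lemma le_sub (K : fieldType) (V : K -> Prop) (W1 W2 : ratfun K -> Prop) :
  valuation_ring V -> torsion_extension V W1 -> torsion_extension V W2 ->
  val_le V W1 W2 -> val_le V W2 W1 -> forall f, W1 f -> W2 f.
Proof.
move=> hV t1 t2 h12 h21 f Wf.
have t1' := t1; have t2' := t2.
move: t1 t2 => [[hW1 e1] tor1] [[hW2 e2] _].
have [->|f0] := eqVneq f 0; first exact: vr0.
have [a [b [b0 hab]]] := frac_repr f.
change (f * polyF b = polyF a) in hab.
have B0 : polyF b != 0 by rewrite polyF_eq0.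
have A0 : polyF a != 0 by rewrite -hab (mulf_neq0 f0 B0).
have [n1 [n10 [al [al0 ua]]]] := tor1 _ A0.
have [n2 [n20 [be [be0 ub]]]] := tor1 _ B0.
have ua' := @tor_pow _ W1 _ _ _ n2 hW1 ua.
have ub' := @tor_pow _ W1 _ _ _ n1 hW1 ub.
rewrite [(n2 * n1)%N]mulnC in ub'.
move: ua' ub'; set N := (n1 * n2)%N; set al' := al ^+ n2; set be' := be ^+ n1.
move=> ua' ub'.
have al'0 : al' != 0 := expf_neq0 _ al0.
have be'0 : be' != 0 := expf_neq0 _ be0.
have ua2 : vunit W2 (polyF a ^+ N / constF al').
  rewrite -polyFX -(polyF_div _ al'0).
  apply: (le_unit hV t1' t2' h12 h21).
  by rewrite (polyF_div _ al'0) polyFX.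
have ub2 : vunit W2 (polyF b ^+ N / constF be').
  rewrite -polyFX -(polyF_div _ be'0).
  apply: (le_unit hV t1' t2' h12 h21).
  by rewrite (polyF_div _ be'0) polyFX.
have AL : constF al' != 0 by rewrite constF_eq0.
have BE : constF be' != 0 by rewrite constF_eq0.
have hf : f = polyF a / polyF b by rewrite -hab (mulfK B0).
have hfN : f ^+ N = (polyF a ^+ N / constF al') / (polyF b ^+ N / constF be')
     * constF (al' / be').
  by rewrite hf expr_div_n constFM (constFV be'0) (I7 _ _ AL BE).
have U0 : polyF a ^+ N / constF al' != 0 by case: ua'.
have U1 : polyF b ^+ N / constF be' != 0 by case: ub'.
have Vc : V (al' / be').
  apply/(e1 _); rewrite (I8 (constF (al' / be')) U0 U1) -hfN.
  apply: (vrM hW1); last by case: (vunitV ua').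
  apply: (vrM hW1); [exact: vrX | by case: ub'].
have N0 : (0 < N)%N by rewrite muln_gt0 n10 n20.
apply: (vr_root hW2 N0).
rewrite hfN; apply: (vrM hW2); last exact/(e2 _).
apply: (vrM hW2); [by case: ua2 | by case: (vunitV ub2)].
Qed.

Theorem mainTheorem3 (K : fieldType) (V : K -> Prop)
    (W1 W2 : ratfun K -> Prop) :
  valuation_ring V ->
  torsion_extension V W1 -> torsion_extension V W2 ->
  (* (1) *)
  ((val_le V W1 W2 <-> (forall p : {poly K}, W1 (polyF p) -> W2 (polyF p))) /\
   (val_le V W1 W2 <->
      (forall p : {poly K}, vmax W1 (polyF p) -> vmax W2 (polyF p)))) /\
  (* (2) *)
  (((forall f, W1 f <-> W2 f) <->
      (forall p : {poly K}, W1 (polyF p) <-> W2 (polyF p))) /\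
   ((forall f, W1 f <-> W2 f) <->
      (forall p : {poly K}, vmax W1 (polyF p) <-> vmax W2 (polyF p)))) /\
  (* (3) <= is a partial order on the torsion extensions of V *)
  ((forall W, torsion_extension V W -> val_le V W W) /\
   (forall W W' W'', torsion_extension V W -> torsion_extension V W' ->
      torsion_extension V W'' ->
      val_le V W W' -> val_le V W' W'' -> val_le V W W'') /\
   (forall W W', torsion_extension V W -> torsion_extension V W' ->
      val_le V W W' -> val_le V W' W -> forall f, W f <-> W' f)).
Proof.
move=> hV t1 t2.
have antis : forall W W', torsion_extension V W -> torsion_extension V W' ->
    val_le V W W' -> val_le V W' W -> forall f, W f <-> W' f.
  move=> W W' t t' h h' f; split; [exact: (le_sub hV t t') | exact: (le_sub hV t' t)].
split; [split|split; [split|]].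
- split; [exact: (le_mem hV t1 t2) | exact: (mem_le t1 t2)].
- split; [exact: (le_max hV t1 t2) | exact: (max_le hV t1 t2)].
- split; first by move=> h p; apply: h.
  move=> h; apply: (antis _ _ t1 t2).
    by apply: (mem_le t1 t2) => p /h.
  by apply: (mem_le t2 t1) => p /h.
- split; first by move=> h p; apply: vmax_ext.
  move=> h; apply: (antis _ _ t1 t2).
    by apply: (max_le hV t1 t2) => p /h.
  by apply: (max_le hV t2 t1) => p /h.
- split; first by move=> W t; apply: (mem_le t t).
  split; last exact: antis.
  move=> W W' W'' t t' t'' h h'; apply: (mem_le t t'') => p Wp.
  by apply: (le_mem hV t' t'' h'); apply: (le_mem hV t t' h).
Qed.
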